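(* Let $$P_0=1-\tfrac29z-\tfrac13v+\tfrac16zv-\tfrac49w+\tfrac13vw-\tfrac16zvw,$$ $$P_1=\tfrac29z+\tfrac13v-\tfrac16yv-\tfrac16zv+\tfrac49w-\tfrac13uw+\tfrac16yuw-\tfrac13vw+\tfrac16yvw+\tfrac16zvw,$$ $$P_2=\tfrac16yv+\tfrac13uw-\tfrac16xuw-\tfrac16yuw-\tfrac16yvw.$$ Then for each $i=0,1,2$ and all $(x,y,z,u,v,w)\in[0,1]^6$ we have $P_i(x,y,z,u,v,w)\ge0$.
   Context: These are the positivity polynomials of the three-stage third-order explicit Runge--Kutta method with $a_{21}=\frac12$, $a_{31}=0$, $a_{32}=\frac34$ and $b=(\frac29,\frac13,\frac49)$: applying it to $u_k'=q_k(u,t)(u_{k-1}-u_k)/\Delta x$ gives $u^{n+1}_k=P_0u^n_k+P_1u^n_{k-1}+P_2u^n_{k-2}+P_3u^n_{k-3}$ with $P_3=\frac16xuw$, where $x=\xi^1_{k-2}$, $y=\xi^1_{k-1}$, $z=\xi^1_k$, $u=\xi^2_{k-1}$, $v=\xi^2_k$, $w=\xi^3_k$ and $\xi^j_\ell=\frac{\Delta t}{\Delta x}q_\ell(y^j,t_n+c_j\Delta t)$ for the stage values $y^j$. *)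

(* Defs.v *)
From Stdlib Require Import Reals.
Open Scope R_scope.

Definition P0 (x y z u v w : R) : R :=
  1 - 2/9*z - 1/3*v + 1/6*z*v - 4/9*w + 1/3*v*w - 1/6*z*v*w.

Definition P1 (x y z u v w : R) : R :=
  2/9*z + 1/3*v - 1/6*y*v - 1/6*z*v + 4/9*w - 1/3*u*w + 1/6*y*u*w
  - 1/3*v*w + 1/6*y*v*w + 1/6*z*v*w.

Definition P2 (x y z u v w : R) : R :=
  1/6*y*v + 1/3*u*w - 1/6*x*u*w - 1/6*y*u*w - 1/6*y*v*w.

Definition in01 (t : R) : Prop := 0 <= t <= 1.

(* Main.v *)
Require Import Defs.
From Stdlib Require Import Reals Lra Psatz.
Open Scope R_scope.

Theorem proposition3 :
  forall x y z u v w : R,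
    in01 x -> in01 y -> in01 z -> in01 u -> in01 v -> in01 w ->
    0 <= P0 x y z u v w /\ 0 <= P1 x y z u v w /\ 0 <= P2 x y z u v w.
Proof.
  intros x y z u v w [Hx0 Hx1] [Hy0 Hy1] [Hz0 Hz1] [Hu0 Hu1] [Hv0 Hv1] [Hw0 Hw1].
  unfold P0, P1, P2.
  assert (A1 : 0 <= (1 - v) * (2 - z) * (1 - w)) by
    (apply Rmult_le_pos; [apply Rmult_le_pos|]; lra).
  assert (A2 : 0 <= v * (1 - w) * (2 - y - z)) by
    (apply Rmult_le_pos; [apply Rmult_le_pos|]; lra).
  assert (A3 : 0 <= (1 - u) * w * (2 - y)) by
    (apply Rmult_le_pos; [apply Rmult_le_pos|]; lra).
  assert (A4 : 0 <= w * y) by (apply Rmult_le_pos; lra).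
  assert (A5 : 0 <= y * v * (1 - w)) by
    (apply Rmult_le_pos; [apply Rmult_le_pos|]; lra).
  assert (A6 : 0 <= u * w * (2 - x - y)) by
    (apply Rmult_le_pos; [apply Rmult_le_pos|]; lra).
  assert (A7 : z * w <= 1) by (assert (0 <= (1-z)*w) by (apply Rmult_le_pos; lra); lra).
  assert (A8 : 0 <= z * w) by (apply Rmult_le_pos; lra).
  split; [|split]; lra.
Qed.
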